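(* Let $\hat W^{\rm opt,narrow}$ be the optimal value of (P1) when all pairs are restricted to lie in $\mathcal M^{\rm narrow}$, and let $\hat W^{\rm narrow}$ be the value of the output of Algorithm IIa. Then $\hat W^{\rm narrow}\ge \hat W^{\rm opt,narrow}/(1+T+\Delta+2J)$.
   Context: Setup. Fix integers $K\ge1$, $N\ge1$, $T\ge1$, $J\ge0$, $\Delta\ge0$. Let $\{\mathcal G_1,\dots,\mathcal G_L\}$ be a partition of $\{1,\dots,K\}$. A chunk is a vector $c\in\{0,1\}^N$ whose ones form a nonempty contiguous block; ${\rm Tail}(c)$ is the largest index $i$ with $c(i)=1$; $i\in c$ means $c(i)=1$; chunks intersect if they share an index. Let $\mathcal U$ be the family of nonempty $U\subseteq\{1,\dots,K\}$ with $|U|\le T$ and $|U\cap\mathcal G_s|\le1$ for all $s$; pairs are elements of $\mathcal M=\mathcal U\times\mathcal C$. Given metrics $p(U,c)\ge0$, weights $\beta^q(U,c)\in[0,1]$ ($q=1,\dots,J$), and binary weights $\alpha^q(U,c)\in\{0,1\}$ ($q$ in a finite set $\mathcal I$) with $\sum_{q\in\mathcal I}\alpha^q(U,c)\le\Delta$ for every pair. A set $F$ of pairs is feasible if: each group meets $U$ for at most one $(U,c)\in F$; each index $i$ lies in $c$ for at most one $(U,c)\in F$; $\sum_F\beta^q\le1$ for all $q\le J$; $\sum_F\alpha^q\le1$ for all $q\in\mathcal I$. Problem (P1) maximizes $\sum_F p$ over feasible $F$. Pairs $(U,c),(U',c')$ conflict if some group meets both $U$ and $U'$, or $c,c'$ intersect,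 or some $q\in\mathcal I$ has $\alpha^q(U,c)=\alpha^q(U',c')=1$. $\mathcal M^{\rm narrow}=\{(U,c):\beta^q(U,c)\le1/2\ \forall q\le J\}$; $\max_{q\le J}\beta^q:=0$ if $J=0$. Algorithm IIa: set $p'=p$ on $\mathcal M^{\rm narrow}$ and an empty stack $S$. For $j=1,\dots,N$: let $(U^*,c^* )$ maximize $p'$ over pairs of $\mathcal M^{\rm narrow}$ with ${\rm Tail}(c)=j$; if $p'(U^*,c^* )>0$, set $\hat p=p'(U^*,c^* )$, push $(U^*,c^* )$ on $S$, and for every $(U,c)\in\mathcal M^{\rm narrow}$ with $p'(U,c)>0$ subtract $\hat p$ from $p'(U,c)$ if $(U,c)$ conflicts with $(U^*,c^* )$, and subtract $2\hat p\max_{q\le J}\beta^q(U,c)$ otherwise. Then, starting with $S'=\emptyset$, repeatedly pop the top of $S$ and add it to $S'$ if $S'$ together with it is feasible. Output $S'$ with value $\hat W^{\rm narrow}=\sum_{(U,c)\in S'}p(U,c)$. *)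

(* Defs.v *)
From HB Require Import structures.
From mathcomp Require Import all_boot all_order all_algebra.
Import Order.TTheory GRing.Theory Num.Theory.
Local Open Scope ring_scope.

(* Conventions:
   - users are 'I_K, indices are 'I_N (0-based);
   - the partition {G_1..G_L} is given by the group map g : 'I_K -> 'I_L;
   - a chunk is encoded by its endpoints (a,b) with a <= b: it is the block a..b,
     Tail = b;
   - the finite index set of the alpha constraints is a finType I. *)

Section Setup.
Variables (R : realFieldType) (K N L T J Delta : nat) (g : 'I_K -> 'I_L) (I : finType).

Definition pairT := ({set 'I_K} * ('I_N * 'I_N))%type.

Variables (p : pairT -> R) (beta : 'I_J -> pairT -> R) (alpha : I -> pairT -> bool).

Definition Uadm (U : {set 'I_K}) : bool :=
  [&& U != set0, (#|U| <= T)%N & [forall s : 'I_L, (#|[set k in U | g k == s]| <= 1)%N]].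

Definition is_chunk (c : 'I_N * 'I_N) : bool := (c.1 <= c.2)%N.
Definition inchunk (c : 'I_N * 'I_N) (i : 'I_N) : bool := (c.1 <= i)%N && (i <= c.2)%N.
Definition Tail (c : 'I_N * 'I_N) : nat := c.2.

Definition inM (x : pairT) : bool := Uadm x.1 && is_chunk x.2.

Definition narrow (x : pairT) : bool := inM x && [forall q : 'I_J, beta q x <= 1 / 2].

Definition feasible (F : {set pairT}) : bool :=
  [&& [forall s : 'I_L, (#|[set x in F | [exists k in x.1, g k == s]]| <= 1)%N],
      [forall i : 'I_N, (#|[set x in F | inchunk x.2 i]| <= 1)%N],
      [forall q : 'I_J, \sum_(x in F) beta q x <= 1] &
      [forall q : I, (\sum_(x in F) (alpha q x : nat) <= 1)%N]].

Definition Wopt_narrow : R :=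
  \big[Num.max/0]_(F : {set pairT} | (F \subset [pred x | narrow x]) && feasible F)
     \sum_(x in F) p x.

Definition conflict (x y : pairT) : bool :=
  [|| [exists k in x.1, exists k' in y.1, g k == g k'],
      [exists i : 'I_N, inchunk x.2 i && inchunk y.2 i] |
      [exists q : I, alpha q x && alpha q y]].

(* max_q beta^q, = 0 when J = 0 *)
Definition maxbeta (x : pairT) : R := \big[Num.max/0]_(q < J) beta q x.

Definition upd (p' : pairT -> R) (xs : pairT) : pairT -> R :=
  fun x => if narrow x && (0 < p' x) then
             (if conflict x xs then p' x - p' xs
              else p' x - 2 * p' xs * maxbeta x)
           else p' x.

(* one iteration (0-based index j) of the first loop; any maximizer may be chosen *)
Inductive step (j : nat) : (pairT -> R) -> seq pairT -> (pairT -> R) -> seq pairT -> Prop :=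
| step_skip (p' : pairT -> R) (S : seq pairT) :
    (forall x, narrow x -> Tail x.2 = j -> p' x <= 0) ->
    step j p' S p' S
| step_push (p' : pairT -> R) (S : seq pairT) (xs : pairT) :
    narrow xs -> Tail xs.2 = j ->
    (forall x, narrow x -> Tail x.2 = j -> p' x <= p' xs) ->
    0 < p' xs ->
    step j p' S (upd p' xs) (xs :: S).

(* states reachable after j iterations; the stack top is the head of the list *)
Inductive reach : nat -> (pairT -> R) -> seq pairT -> Prop :=
| reach0 : reach 0 p [::]
| reachS (j : nat) (p' p'' : pairT -> R) (S S'' : seq pairT) :
    reach j p' S -> step j p' S p'' S'' -> reach j.+1 p'' S''.

Definition popout (S : seq pairT) : {set pairT} :=
  foldl (fun F x => if feasible (x |: F) then x |: F else F) set0 S.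

Definition W_narrow (S : seq pairT) : R := \sum_(x in popout S) p x.

End Setup.

(* Main.v *)
Require Import Defs.
From HB Require Import structures.
From mathcomp Require Import all_boot all_order all_algebra.
From mathcomp Require Import lra.
Import Order.TTheory GRing.Theory Num.Theory.
Local Open Scope ring_scope.

Section Pf.
Variables (R : realFieldType) (K N L T J Delta : nat) (g : 'I_K -> 'I_L) (I : finType)
  (p : pairT K N -> R) (beta : 'I_J -> pairT K N -> R) (alpha : I -> pairT K N -> bool).
Hypothesis betaP : forall q x, inM K N L T g x -> 0 <= beta q x <= 1.
Hypothesis alphaP : forall x, inM K N L T g x -> (\sum_(q : I) (alpha q x : nat) <= Delta)%N.

Local Notation nar := (narrow R K N L T J g beta).
Local Notation feas := (feasible R K N L J g I beta alpha).
Local Notation updf := (upd R K N L T J g I beta alpha).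
Local Notation conf := (conflict K N L g I alpha).
Local Notation mb := (maxbeta R K N J beta).

Lemma mb_ge0 (x : pairT K N) : 0 <= mb x.
Proof. by rewrite /maxbeta; elim/big_rec: _ => // i y _ hy; rewrite le_max hy orbT. Qed.

Lemma mb_le_half (x : pairT K N) : nar x -> mb x <= 1/2.
Proof.
move=> /andP[_ /forallP H]; rewrite /maxbeta; elim/big_rec: _ => [|i y _ hy].
  by rewrite mul1r invr_ge0 ler0n.
by rewrite ge_max hy H.
Qed.

Lemma beta_le_mb q (x : pairT K N) : beta q x <= mb x.
Proof. by rewrite /maxbeta (bigD1 q) //= le_max lexx. Qed.

Lemma mb_le_sum (x : pairT K N) : inM K N L T g x -> mb x <= \sum_(q < J) beta q x.
Proof.
move=> hx; rewrite /maxbeta.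
suff: 0 <= \big[Num.max/0]_(q < J) beta q x <= \sum_(q < J) beta q x by case/andP.
apply: (big_rec2 (fun a b => 0 <= a <= b)) => [|i a b _ /andP[ha hb]]; first by rewrite lexx.
have /andP[b0 _] := betaP i x hx.
rewrite le_max ha orbT /= ge_max; apply/andP; split; first by rewrite lerDl; apply: le_trans hb.
by rewrite (le_trans hb) // lerDr.
Qed.

Lemma conf_grp (y x : pairT K N) (k k' : 'I_K) : k \in y.1 -> k' \in x.1 -> g k = g k' -> conf y x.
Proof.
move=> hk hk' e; apply/orP; left; apply/existsP; exists k; rewrite hk /=.
by apply/existsP; exists k'; rewrite hk' e eqxx.
Qed.

Lemma conf_idx (y x : pairT K N) (i : 'I_N) : inchunk N y.2 i -> inchunk N x.2 i -> conf y x.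
Proof. by move=> h1 h2; apply/or3P; apply: Or32; apply/existsP; exists i; rewrite h1. Qed.

Lemma conf_alpha (y x : pairT K N) (q : I) : alpha q y -> alpha q x -> conf y x.
Proof. by move=> h1 h2; apply/or3P; apply: Or33; apply/existsP; exists q; rewrite h1. Qed.

Lemma conf_self (x : pairT K N) : inM K N L T g x -> conf x x.
Proof.
case/andP=> /and3P[/set0Pn[k kx] _ _] _; exact: (conf_grp x x k k kx kx erefl).
Qed.

Lemma upd_le (p' : pairT K N -> R) (xs y : pairT K N) : 0 <= p' xs -> updf p' xs y <= p' y.
Proof.
move=> h; rewrite /upd; case: ifP => // _; case: ifP => _; first by rewrite gerBl.
by rewrite gerBl mulr_ge0 // ?mb_ge0 // mulr_ge0.
Qed.

Lemma sum_bool_card (P : pred (pairT K N)) (F : {set pairT K N}) :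
  (\sum_(y in F) (P y : nat) = #|[set y in F | P y]|)%N.
Proof.
rewrite -sum1_card; symmetry.
rewrite (eq_bigl (fun y => (y \in F) && P y)); last by move=> y; rewrite inE.
by rewrite big_mkcondr /=; apply: eq_bigr => y _; case: (P y).
Qed.

Lemma card1_add (P : pred (pairT K N)) x (A : {set pairT K N}) :
  (#|[set z in A | P z]| <= 1)%N -> (P x -> forall y, y \in A -> P y -> False) ->
  (#|[set z in x |: A | P z]| <= 1)%N.
Proof.
move=> hA H; case Px: (P x).
  rewrite -(cards1 x); apply: subset_leq_card; apply/subsetP => z.
  rewrite !inE => /andP[/orP[//|zA] Pz]; exfalso; exact: H Px z zA Pz.
apply: leq_trans hA; apply: subset_leq_card; apply/subsetP => z.
rewrite !inE => /andP[/orP[/eqP->|->] Pz]; first by rewrite Px in Pz.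
by rewrite Pz.
Qed.

Lemma nar_inM (x : pairT K N) : nar x -> inM K N L T g x.
Proof. by case/andP. Qed.

Lemma feas_add (A : {set pairT K N}) (x : pairT K N) : feas A -> x \notin A ->
  (forall y, y \in A -> ~~ conf y x) ->
  (forall q, \sum_(y in x |: A) beta q y <= 1) -> feas (x |: A).
Proof.
move=> /and4P[hG hI hB hA] xA nc hb; apply/and4P; split.
- apply/forallP => s; apply: card1_add; first exact: (forallP hG s).
  move=> /existsP[k' /andP[k'x e']] y yA /existsP[k /andP[ky e]].
  apply: (negP (nc y yA)); apply: (conf_grp y x k k' ky k'x).
  by rewrite (eqP e) (eqP e').
- apply/forallP => i; apply: card1_add; first exact: (forallP hI i).
  move=> hx y yA hy; apply: (negP (nc y yA)); exact: conf_idx hy hx.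
- by apply/forallP.
- apply/forallP => q; rewrite big_setU1 //=; case ax: (alpha q x) => /=.
    rewrite big1 // => y yA; case ay: (alpha q y) => //; exfalso.
    by apply: (negP (nc y yA)); exact: conf_alpha ay ax.
  exact: (forallP hA q).
Qed.

Lemma delta_conf (p' : pairT K N -> R) xs y : nar y -> 0 < p' y -> conf y xs ->
  p' y - updf p' xs y = p' xs.
Proof. by move=> ny py cy; rewrite /upd ny py cy /=; lra. Qed.

Lemma delta_beta (p' : pairT K N -> R) xs y q : nar y -> 0 < p' y -> 0 <= p' xs ->
  2 * p' xs * beta q y <= p' y - updf p' xs y.
Proof.
move=> ny py h; have hb := beta_le_mb q y; have hm := mb_le_half y ny.
rewrite /upd ny py /=; case: ifP => _; nra.
Qed.

Lemma delta_up (p' : pairT K N -> R) xs y : 0 <= p' xs ->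
  (0 < p' y -> (Tail N xs.2 <= Tail N y.2)%N) ->
  p' y - updf p' xs y <= p' xs * (((conf y xs && (Tail N xs.2 <= Tail N y.2)%N : nat)%:R) + 2 * mb y).
Proof.
move=> h ht; have hm := mb_ge0 y; rewrite /upd; case: ifP => [/andP[ny py]|_].
  rewrite (ht py); case: ifP => _ /=; nra.
rewrite subrr; apply: mulr_ge0 => //; apply: addr_ge0 => //; nra.
Qed.

Lemma count_conf (F : {set pairT K N}) xs : nar xs -> (forall y, y \in F -> nar y) -> feas F ->
  (\sum_(y in F) (conf y xs && (Tail N xs.2 <= Tail N y.2)%N : nat) <= T + 1 + Delta)%N.
Proof.
move=> nx nF /and4P[hG hI hB hA].
have /andP[/andP[/and3P[_ hT _] _] _] := nx.
apply: leq_trans (_ : \sum_(y in F) (\sum_(k in xs.1) ([exists k0 in y.1, g k0 == g k] : nat)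
   + (inchunk N y.2 xs.2.2 : nat) + \sum_(q : I) (alpha q xs && alpha q y : nat)) <= _)%N.
  apply: leq_sum => y yF; case: andP => //= [[cy tj]].
  case/or3P: cy.
  - move=> /existsP[k /andP[ky /existsP[k' /andP[k'x e]]]].
    rewrite !addn_gt0 (bigD1 k') //=.
    have -> : [exists k0 in y.1, g k0 == g k'] by apply/existsP; exists k; rewrite ky.
    done.
  - move=> /existsP[i /andP[/andP[h1 h2] /andP[h3 h4]]].
    have -> : inchunk N y.2 xs.2.2.
      by rewrite /inchunk (leq_trans h1 h4) /=; move: tj; rewrite /Tail.
    by rewrite !addn_gt0 orbT.
  - move=> /existsP[q /andP[ay ax]].
    by rewrite !addn_gt0 (bigD1 q) //= ax ay /= orbT.
rewrite !big_split /=; apply: leq_add; first apply: leq_add.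
- rewrite exchange_big /=; apply: (@leq_trans (\sum_(k in xs.1) 1)%N); last by rewrite sum1_card.
  apply: leq_sum => k _; rewrite sum_bool_card; exact: (forallP hG (g k)).
- rewrite sum_bool_card; exact: (forallP hI xs.2.2).
- rewrite exchange_big /=; apply: leq_trans (alphaP xs (nar_inM xs nx)).
  apply: leq_sum => q _; case: (alpha q xs) => /=; last by rewrite big1.
  exact: (forallP hA q).
Qed.

Lemma delta_sum_up (p' : pairT K N -> R) xs (F : {set pairT K N}) : 0 <= p' xs -> nar xs ->
  (forall y, y \in F -> nar y) -> feas F ->
  (forall y, nar y -> (Tail N y.2 < Tail N xs.2)%N -> p' y <= 0) ->
  \sum_(y in F) (p' y - updf p' xs y) <= p' xs * ((T + 1 + Delta)%:R + 2 * J%:R).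
Proof.
move=> h nx nF fF hlt.
apply: le_trans (_ : \sum_(y in F) p' xs * (((conf y xs && (Tail N xs.2 <= Tail N y.2)%N : nat)%:R) + 2 * mb y) <= _).
  apply: ler_sum => y yF; apply: delta_up => // py.
  rewrite leqNgt; apply/negP => /(hlt y (nF y yF)); rewrite leNgt py.
  done.
rewrite -mulr_sumr; apply: ler_wpM2l => //.
rewrite big_split /= -natr_sum; apply: lerD; first by rewrite ler_nat; exact: count_conf.
rewrite -mulr_sumr; apply: ler_wpM2l => //.
apply: le_trans (_ : \sum_(y in F) \sum_(q < J) beta q y <= _).
  by apply: ler_sum => y yF; apply: mb_le_sum; apply: nar_inM; apply: nF.
rewrite exchange_big /=; apply: le_trans (_ : \sum_(q < J) 1 <= _); last by rewrite sumr_const card_ord.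
case/and4P: fF => _ _ hB _.
by apply: ler_sum => q _; exact: (forallP hB q).
Qed.

Local Notation reachR := (reach R K N L T J g I p beta alpha).

Definition popfrom (F : {set pairT K N}) (S : seq (pairT K N)) : {set pairT K N} :=
  foldl (fun F x => if feas (x |: F) then x |: F else F) F S.

Definition CC : R := (T + 1 + Delta)%:R + 2 * J%:R.

Lemma CC_ge0 : 0 <= CC.
Proof. by rewrite /CC addr_ge0 // mulr_ge0. Qed.

Lemma tail_ok (y xs : pairT K N) : nar y -> nar xs -> Tail N y.2 = Tail N xs.2 ->
  conf y xs.
Proof.
move=> /andP[/andP[_ cy] _] /andP[/andP[_ cx] _] e; rewrite /Tail in e.
rewrite /is_chunk e in cy; rewrite /is_chunk in cx.
apply: (conf_idx y xs xs.2.2); rewrite /inchunk.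
- by apply/andP; split => //; rewrite e.
- by apply/andP; split => //; apply: leqnn.
Qed.

Lemma inv j0' (p0 : pairT K N -> R) S00 : reachR j0' p0 S00 -> exists H : R, [/\ 0 <= H,
  (forall F : {set pairT K N}, (forall y, y \in F -> nar y) -> feas F ->
     \sum_(y in F) p y <= \sum_(y in F) p0 y + CC * H),
  (forall A : {set pairT K N}, (forall y, y \in A -> nar y) -> feas A ->
     (forall y, y \in A -> 0 < p0 y) ->
     \sum_(y in A) p0 y + H <= \sum_(y in popfrom A S00) p y) &
  (forall y, nar y -> (Tail N y.2 < j0')%N -> p0 y <= 0)].
Proof.
elim=> [|j q' q'' S0 S1 _ [H [H0 Hup Hlo Htl]] st].
  exists 0; split => //.
  - by move=> F _ _; rewrite mulr0 addr0.
  - by move=> A _ _ _; rewrite addr0.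
case: st Hup Hlo Htl => [p' S hskip Hup Hlo Htl|p' S xs nx tx hmax px Hup Hlo Htl].
  exists H; split => // y ny; rewrite ltnS leq_eqVlt => /orP[/eqP e|lt].
    exact: hskip.
  exact: Htl.
have px0 : 0 <= p' xs by apply: ltW.
have updxs : updf p' xs xs = 0.
  have := delta_conf p' xs xs nx px (conf_self xs (nar_inM xs nx)); lra.
have mono y : updf p' xs y <= p' y by apply: upd_le.
have split_sum (F : {set pairT K N}) :
    \sum_(y in F) p' y = \sum_(y in F) updf p' xs y + \sum_(y in F) (p' y - updf p' xs y).
  by rewrite -big_split /=; apply: eq_bigr => y _; rewrite addrC subrK.
have dge0 y : 0 <= p' y - updf p' xs y by rewrite subr_ge0.
exists (H + p' xs); split.
- by rewrite addr_ge0.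
- move=> F nF fF; have := Hup F nF fF; rewrite split_sum.
  have hlt : forall y, nar y -> (Tail N y.2 < Tail N xs.2)%N -> p' y <= 0.
    by move=> y ny; rewrite tx; apply: Htl.
  have := delta_sum_up p' xs F px0 nx nF fF hlt.
  move=> hd hu; have e : p' xs * ((T + 1 + Delta)%:R + 2 * J%:R) = CC * p' xs by rewrite mulrC.
  rewrite mulrDr; lra.
- move=> A nA fA pA /=.
  have xsA : xs \notin A by apply/negP => /pA; rewrite updxs ltxx.
  rewrite /popfrom /= -/(popfrom _ S).
  case: ifP => hf.
    apply: le_trans (Hlo _ _ hf _); last first.
    + by move=> y; rewrite !inE => /orP[/eqP->|/pA h]; [|apply: lt_le_trans h (mono y)].
    + by move=> y; rewrite !inE => /orP[/eqP->|/nA].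
    rewrite big_setU1 //=; have : \sum_(y in A) updf p' xs y <= \sum_(y in A) p' y.
      by apply: ler_sum => y _.
    lra.
  have pA' y : y \in A -> 0 < p' y by move=> /pA h; apply: lt_le_trans h (mono y).
  apply: le_trans (Hlo _ nA fA pA'); rewrite split_sum.
  suff : p' xs <= \sum_(y in A) (p' y - updf p' xs y) by lra.
  have [/existsP[y /andP[yA cy]]|nc] := boolP [exists y in A, conf y xs].
    rewrite (bigD1 y) //= (delta_conf p' xs y (nA y yA) (pA' y yA) cy) lerDl.
    by apply: sumr_ge0 => z _.
  have nc' y : y \in A -> ~~ conf y xs.
    by move=> yA; apply/negP => c; apply: (negP nc); apply/existsP; exists y; rewrite yA c.
  have [/forallP hall|/forallPn[q hq]] := boolP [forall q, \sum_(y in xs |: A) beta q y <= 1].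
    by have := feas_add A xs fA xsA nc' hall; rewrite hf.
  rewrite -ltNge big_setU1 //= in hq.
  have hbx : beta q xs <= 1/2 by case/andP: nx => _ /forallP.
  apply: le_trans (_ : \sum_(y in A) 2 * p' xs * beta q y <= _); last first.
    by apply: ler_sum => y yA; apply: delta_beta => //; [apply: nA | apply: pA'].
  rewrite -mulr_sumr; nra.
- move=> y ny; rewrite ltnS leq_eqVlt => /orP[/eqP e|ltj].
    rewrite /upd ny /=; case: ifP => [py|/negbT]; last by rewrite -leNgt.
    rewrite (tail_ok y xs ny nx (etrans e (esym tx))); have := hmax y ny e; lra.
  have := Htl y ny ltj; rewrite /upd ny /=; case: ifP => [py|_]; lra.
Qed.

Lemma final (p' : pairT K N -> R) S : reachR N p' S ->
  Wopt_narrow R K N L T J g I p beta alpha / (1 + T%:R + Delta%:R + 2 * J%:R)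
    <= W_narrow R K N L J g I p beta alpha S.
Proof.
move=> /inv [H [H0 Hup Hlo Htl]].
have eC : 1 + T%:R + Delta%:R + 2 * J%:R = CC by rewrite /CC !natrD; lra.
have C0 : 0 < CC.
  have h1 : 0 < (T + 1 + Delta)%:R :> R by rewrite ltr0n addn_gt0 addn1 ltn0Sn.
  have h2 : 0 <= 2 * J%:R :> R by rewrite mulr_ge0.
  rewrite /CC; lra.
rewrite eC ler_pdivrMr //.
have hW : H <= W_narrow R K N L J g I p beta alpha S.
  have := Hlo set0; rewrite big_set0 add0r; apply => //.
  - by move=> y; rewrite inE.
  - apply/and4P; split; apply/forallP => q; rewrite ?big_set0 //.
    + by apply: leq_trans (subset_leq_card (_ : _ \subset set0)) _; [apply/subsetP => y; rewrite !inE | rewrite cards0].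
    + by apply: leq_trans (subset_leq_card (_ : _ \subset set0)) _; [apply/subsetP => y; rewrite !inE | rewrite cards0].
  - by move=> y; rewrite inE.
apply: le_trans (_ : CC * H <= _); last by rewrite [_ * CC]mulrC; apply: ler_wpM2l => //; apply: ltW.
rewrite /Wopt_narrow; elim/big_rec: _ => [|F m /andP[hsub hf] hm]; first by rewrite mulr_ge0 // ltW.
rewrite ge_max hm andbT.
have nF : forall y, y \in F -> nar y by move=> y /(subsetP hsub); rewrite inE.
apply: le_trans (Hup F nF hf) _; rewrite gerDr.
apply: le_trans (_ : \sum_(y in F) (0:R) <= _); last by rewrite big1.
by apply: ler_sum => y yF; apply: Htl (nF y yF) (ltn_ord _).
Qed.

End Pf.

Theorem propositionI (R : realFieldType) (K N L T J Delta : nat)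
  (g : 'I_K -> 'I_L) (I : finType)
  (p : pairT K N -> R) (beta : 'I_J -> pairT K N -> R) (alpha : I -> pairT K N -> bool) :
  (0 < K)%N -> (0 < N)%N -> (0 < T)%N ->
  (forall s : 'I_L, exists k, g k = s) ->
  (forall x, inM K N L T g x -> 0 <= p x) ->
  (forall q x, inM K N L T g x -> 0 <= beta q x <= 1) ->
  (forall x, inM K N L T g x -> (\sum_(q : I) (alpha q x : nat) <= Delta)%N) ->
  forall (p' : pairT K N -> R) (S : seq (pairT K N)),
    reach R K N L T J g I p beta alpha N p' S ->
    Wopt_narrow R K N L T J g I p beta alpha / (1 + T%:R + Delta%:R + 2 * J%:R)
      <= W_narrow R K N L J g I p beta alpha S.
Proof.
move=> _ _ _ _ _ hb ha p' S hr.
exact: (final R K N L T J Delta g I p beta alpha hb ha p' S hr).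
Qed.
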